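(* Let $S$ be a finite nonempty set of positive integers and $s=\max S$. The minimum density of a dominating set in the distance graph $G(S)$ is achieved by a periodic dominating set with period at most $(2s)2^{2s}$.
   Context: The distance graph $G(S)$ has vertex set $\mathbb{Z}$, with $i,j$ adjacent iff $|i-j|\in S$. A set $D\subseteq\mathbb{Z}$ is dominating if every integer is in $D$ or adjacent to an element of $D$. The density of $A\subseteq\mathbb{Z}$ is $\delta(A)=\limsup_{N\to\infty}\frac{|A\cap[-N,N]|}{2N+1}$. A set $A$ is periodic with period $p$ if $A+p=A$. *)

(* Defs.v *)
From mathcomp Require Import all_boot all_order all_algebra.
From mathcomp Require Import all_classical all_reals all_analysis.
Set Implicit Arguments. Unset Strict Implicit. Unset Printing Implicit Defensive.
Import Order.TTheory GRing.Theory Num.Theory.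
Local Open Scope ring_scope.

(* Subsets of Z are represented as boolean predicates int -> bool
   (classically every subset is of this form). *)

Definition adj (S : seq nat) (i j : int) : bool := (absz (i - j))%N \in S.

Definition dominating (S : seq nat) (D : int -> bool) : Prop :=
  forall x : int, D x \/ exists y : int, D y /\ adj S x y.

Definition count_sym (A : int -> bool) (N : nat) : nat :=
  (\sum_(i < (2 * N).+1) (A ((i : nat)%:Z - (N : nat)%:Z)%R : nat))%N.

Definition density (R : realType) (A : int -> bool) : \bar R :=
  limn_esup (fun N : nat => ((count_sym A N)%:R / ((2 * N).+1)%:R : R)%:E).

Definition periodic_set (A : int -> bool) (p : nat) : Prop :=
  forall x : int, A (x + p%:Z) = A x.

(* Main.v *)
Require Import Defs.
From mathcomp Require Import all_boot all_order all_algebra.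
From mathcomp Require Import all_classical all_reals all_analysis.

From mathcomp Require Import zify.
Import Order.TTheory GRing.Theory Num.Theory.
Local Open Scope ring_scope.
Definition domb (S : seq nat) (f : int -> bool) (c : int) : bool :=
  f c || has (fun k : nat => f (c + k%:Z) || f (c - k%:Z)) S.

Lemma dominatingP S D : dominating S D <-> forall x, domb S D x.
Proof.
split=> H x.
- rewrite /domb; case: (H x) => [->//|[y [Dy]]]; rewrite /adj => yS.
  apply/orP; right; apply/hasP; exists `|x - y|%N => //.
  case: (lerP 0 (x - y)) => h.
  + have -> : x - `|x - y|%N%:Z = y by lia.
    by rewrite Dy orbT.
  + have -> : x + `|x - y|%N%:Z = y by lia.
    by rewrite Dy.
- case/orP: (H x) => [->|/hasP [k kS /orP [h|h]]]; [by left| |]; right.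
  + exists (x + Posz k); split => //; rewrite /adj.
    have -> : absz (x - (x + Posz k))%R = k by lia.
    exact: kS.
  + exists (x - Posz k); split => //; rewrite /adj.
    have -> : absz (x - (x - Posz k))%R = k by lia.
    exact: kS.
Qed.

Lemma domb_shift S s f g (c c' : int) :
  (forall k, k \in S -> (k <= s)%N) ->
  (forall d : int, (`|d| <= s)%N -> f (c + d) = g (c' + d)) ->
  domb S f c = domb S g c'.
Proof.
move=> Hs H; rewrite /domb.
have := H 0; rewrite !addr0 => -> //.
congr (_ || _); apply: eq_in_has => k /Hs ks.
by rewrite (H k%:Z) // (H (- k%:Z)) ?abszN.
Qed.

Definition valid S s (w : int -> bool) (L : nat) :=
  forall c : nat, (s <= c)%N -> (c + s < L)%N -> domb S w c%:Z.

Definition cnt (w : int -> bool) (L : nat) : nat :=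
  (\sum_(i < L) (w i%:Z : nat))%N.

Lemma pigeon s (w : int -> bool) : exists i j : nat, [/\ (i < j)%N, (j <= 2 ^ (2*s))%N &
   forall k, (k < 2*s)%N -> w (i + k)%N%:Z = w (j + k)%N%:Z].
Proof.
pose n := (2 ^ (2*s))%N.
pose F := fun t : 'I_n.+1 => [ffun k : 'I_(2*s) => w (t + k)%N%:Z].
have : ~~ injectiveb F.
  apply/negP => /injectiveP /leq_card; rewrite card_ffun card_bool !card_ord.
  by rewrite /n ltnn.
case/injectivePn => x [y xy Fxy].
have eqk : forall k, (k < 2*s)%N -> w (x + k)%N%:Z = w (y + k)%N%:Z.
  move=> k kl; have := congr1 (fun f : {ffun _ -> bool} => f (Ordinal kl)) Fxy; by rewrite !ffunE.
have xn := ltn_ord x; have yn := ltn_ord y.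
case: (ltngtP x y) => h.
- by exists x, y; split.
- by exists y, x; split => // k kl; rewrite eqk.
- by move: xy; rewrite (val_inj h) eqxx.
Qed.
Lemma cut_valid S s w L i j :
  (forall k, k \in S -> (k <= s)%N) ->
  valid S s w L -> (i < j)%N -> (j + 2*s <= L)%N ->
  (forall k, (k < 2*s)%N -> w (i + k)%N%:Z = w (j + k)%N%:Z) ->
  valid S s (fun x => if x < i%:Z then w x else w (x + (j - i)%N%:Z)) (L - (j - i)).
Proof.
move=> Hs Hv ij jL eqk c sc cL.
case: (ltnP c (i + s)) => ci.
- rewrite (@domb_shift S s _ w c%:Z c%:Z) //; first by apply: Hv => //; lia.
  move=> d hd; case: ifP => // /negbT; rewrite -leNgt => h.
  have [k [hk1 hk2]] : exists k : nat, c%:Z + d = (i + k)%N%:Z /\ (k < 2*s)%N.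
    by exists (absz (c%:Z + d - i%:Z)%R); split; lia.
  rewrite hk1 eqk //; congr w; lia.
- rewrite (@domb_shift S s _ w c%:Z (c + (j - i))%N%:Z) //; first by apply: Hv; lia.
  move=> d hd; case: ifP => [h|_]; first lia.
  congr w; lia.
Qed.

Lemma cnt_nat w L : cnt w L = (\sum_(0 <= x < L) (w x%:Z : nat))%N.
Proof. by rewrite /cnt big_mkord. Qed.

Lemma cut_cnt w L i j :
  (i < j)%N -> (j <= L)%N ->
  cnt w L = addn (cnt (fun x => if x < i%:Z then w x else w (x + (j - i)%N%:Z)) (L - (j - i)))
            (\sum_(k < j - i) (w (i + k)%N%:Z : nat))%N.
Proof.
move=> ij jL; rewrite !cnt_nat.
rewrite (@big_cat_nat _ _ _ i 0 (L - (j - i))) //=; last lia.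
rewrite (@big_cat_nat _ _ _ i 0 L) //=; last lia.
rewrite (@big_cat_nat _ _ _ j i L) //=.
have -> : (\sum_(0 <= x < i) ((if (x%:Z < i%:Z)%R then w x%:Z else w (x%:Z + (j - i)%N%:Z)%R) : nat)
        = \sum_(0 <= x < i) (w x%:Z : nat))%N.
  by apply: eq_big_nat => x /andP [_ xi]; rewrite ltz_nat xi.
have -> : (\sum_(i <= x < L - (j - i)) ((if (x%:Z < i%:Z)%R then w x%:Z else w (x%:Z + (j - i)%N%:Z)%R) : nat)
        = \sum_(j <= x < L) (w x%:Z : nat))%N.
  have hj : j = (i + (j - i))%N by lia.
  rewrite [in RHS]hj big_addn.
  rewrite [in RHS]big_nat_cond [in LHS]big_nat_cond.
  apply: eq_bigr => x /andP [/andP [ix xl] _].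
  rewrite ifF; last by rewrite ltz_nat; lia.
  congr (nat_of_bool (w _)); lia.
have -> : (\sum_(k < j - i) (w (i + k)%N%:Z : nat) = \sum_(i <= x < j) (w x%:Z : nat))%N.
  rewrite [in RHS](_ : i = 0 + i)%N // big_addn big_mkord.
  apply: eq_bigr => x _; congr (nat_of_bool (w _)); lia.
all: lia.
Qed.

Definition Pfun (p : nat) (g : nat -> bool) (x : int) : bool := g (absz (x %% p%:Z)%Z).

Lemma Pfun_per p g (m x : int) : Pfun p g (x + m * p%:Z) = Pfun p g x.
Proof. by rewrite /Pfun addrC modzMDl. Qed.

Lemma Pfun_small p g (t : nat) : (t < p)%N -> Pfun p g t%:Z = g t.
Proof. by move=> tp; rewrite /Pfun modz_small //; apply/andP; split; lia. Qed.

Lemma cycle_dom S s w L i j :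
  (forall k, k \in S -> (k <= s)%N) ->
  valid S s w L -> (i < j)%N -> (j + 2*s <= L)%N ->
  (forall k, (k < 2*s)%N -> w (i + k)%N%:Z = w (j + k)%N%:Z) ->
  dominating S (Pfun (j - i) (fun k => w (i + k)%N%:Z)).
Proof.
move=> Hs Hv ij jL eqk.
set p := (j - i)%N; set g := fun k => w (i + k)%N%:Z.
have p0 : (0 < p)%N by rewrite /p; lia.
have agree : forall t : nat, (t < p + 2*s)%N -> Pfun p g t%:Z = w (i + t)%N%:Z.
  elim/ltn_ind => t IH ht.
  case: (ltnP t p) => tp; first by rewrite Pfun_small.
  have -> : t%:Z = (t - p)%N%:Z + 1 * p%:Z by lia.
  rewrite Pfun_per IH; [|lia|lia].
  have := eqk (t - p)%N; rewrite /p => ->; last lia.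
  congr w; lia.
apply/dominatingP => x.
pose r := ((x - s%:Z) %% p%:Z)%Z; pose m := ((x - s%:Z) %/ p%:Z)%Z.
have hx : x - s%:Z = m * p%:Z + r by apply: divz_eq.
have r0 : 0 <= r by apply: modz_ge0; lia.
have rp : r < p%:Z by apply: ltz_pmod; lia.
pose t := (s + absz r)%N.
rewrite (@domb_shift S s _ (Pfun p g) x t%:Z) //; last first.
  move=> d hd; have -> : x + d = (t%:Z + d) + m * p%:Z by lia.
  by rewrite Pfun_per.
rewrite (@domb_shift S s _ w t%:Z (i + t)%N%:Z) //; first by apply: Hv; lia.
move=> d hd; have -> : t%:Z + d = (absz (t%:Z + d)%R)%:Z by lia.
rewrite agree; last lia.
congr w; lia.
Qed.
Lemma lower_bound S s (p0 c0 : nat) :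
  (forall k, k \in S -> (k <= s)%N) ->
  (forall p g, (0 < p)%N -> (p <= 2^(2*s))%N -> dominating S (Pfun p g) ->
     (c0 * p <= (\sum_(k < p) (g k : nat)) * p0)%N) ->
  forall L w, valid S s w L -> (c0 * L <= cnt w L * p0 + c0 * (2^(2*s) + 2*s))%N.
Proof.
move=> Hs Hmin; elim/ltn_ind => L IH w Hv.
case: (ltnP L (2^(2*s) + 2*s)) => hL.
  by apply: leq_trans (leq_addl _ _); rewrite leq_mul2l ltnW ?orbT.
have [i [j [ij jn eqk]]] := pigeon s w.
have jL : (j + 2*s <= L)%N by lia.
have hc := @cut_valid S s w L i j Hs Hv ij jL eqk.
have IH' := IH _ _ _ hc; have {IH'} IH' := IH' ltac:(lia).
have hd := @cycle_dom S s w L i j Hs Hv ij jL eqk.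
have hm := Hmin (j - i)%N _ ltac:(lia) ltac:(lia) hd.
rewrite (@cut_cnt w L i j) //; last lia.
move: IH' hm; set A := cnt _ _; set B := (\sum_(k < j - i) _)%N.
have : (c0 * L = c0 * (L - (j - i)) + c0 * (j - i))%N.
  by rewrite -mulnDr; congr muln; lia.
nia.
Qed.

Definition mkt (n : nat) (g : nat -> bool) : n.-tuple bool :=
  Tuple (introT eqP (size_mkseq g n)).

Lemma mkt_nth n g k : (k < n)%N -> nth false (mkt n g) k = g k.
Proof. by move=> kn; rewrite /mkt /= nth_mkseq. Qed.

Lemma Pfun_ext p g g' : (forall k, (k < p)%N -> g k = g' k) -> (0 < p)%N ->
  Pfun p g = Pfun p g'.
Proof.
move=> H p0; apply/funext => x; rewrite /Pfun H //.
have : (x %% p%:Z)%Z < p%:Z by apply: ltz_pmod; lia.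
have : 0 <= (x %% p%:Z)%Z by apply: modz_ge0; lia.
lia.
Qed.

Lemma exists_min S s :
  exists p0 g0, [/\ (0 < p0)%N, (p0 <= 2^(2*s))%N, dominating S (Pfun p0 g0) &
    forall p g, (0 < p)%N -> (p <= 2^(2*s))%N -> dominating S (Pfun p g) ->
       ((\sum_(k < p0) (g0 k : nat)) * p <= (\sum_(k < p) (g k : nat)) * p0)%N].
Proof.
set n := (2^(2*s))%N.
have n0 : (0 < n)%N by rewrite expn_gt0.
pose T := ('I_n.+1 * n.-tuple bool)%type.
pose good := fun x : T => (0 < x.1)%N && `[< dominating S (Pfun x.1 (nth false x.2)) >].
pose key := fun x : T => ((\sum_(k < x.1) (nth false x.2 k : nat))%:R / (x.1 : nat)%:R : rat).
have one : (1 < n.+1)%N by [].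
pose i0 : T := (Ordinal one, mkt n (fun _ => true)).
have gi0 : good i0.
  apply/andP; split => //; apply/asboolP/dominatingP => x.
  rewrite /domb /i0 /= /Pfun modz1 /= mkt_nth //.
case: (@arg_minP _ _ T i0 good key gi0) => x0 /andP [x0p /asboolP x0d] Hmin.
exists x0.1, (nth false x0.2); split => //.
  by rewrite -ltnS ltn_ord.
move=> p g p0 pn hd.
have pn1 : (p < n.+1)%N by [].
pose y : T := (Ordinal pn1, mkt n g).
have ey : Pfun p (nth false (mkt n g)) = Pfun p g.
  by apply: Pfun_ext => // k kp; rewrite mkt_nth //; lia.
have gy : good y by apply/andP; split => //; apply/asboolP; rewrite /y /= ey.
have := Hmin y gy; rewrite /key /y /=.
have -> : (\sum_(k < p) (nth false (mkt n g) k : nat))%N = (\sum_(k < p) (g k : nat))%N.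
  apply: eq_bigr => k _; rewrite mkt_nth //; have := ltn_ord k; lia.
rewrite ler_pdivrMr ?ltr0n // mulrAC ler_pdivlMr ?ltr0n //.
by rewrite -!natrM ler_nat.
Qed.
Lemma per_window p g (b : int) : (0 < p)%N ->
  (\sum_(k < p) (Pfun p g (k%:Z + b) : nat))%N = (\sum_(k < p) (g k : nat))%N.
Proof.
case: p => [//|q] _; set p := q.+1.
pose f := fun b : int => (\sum_(k < p) (Pfun p g (k%:Z + b) : nat))%N.
have step : forall b, f (b + 1) = f b.
  move=> c; rewrite /f /p.
  rewrite big_ord_recr big_ord_recl /=.
  have -> : Pfun q.+1 g (q%:Z + (c + 1)) = Pfun q.+1 g (0%:Z + c).
    by rewrite -[in RHS](Pfun_per _ _ 1); congr Pfun; lia.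
  rewrite addnC; congr addn; apply: eq_bigr => k _; congr (nat_of_bool (Pfun _ _ _)).
  rewrite /bump /=; lia.
have stepn : forall (m : nat) b, f (b + m%:Z) = f b.
  elim => [|m IH] c; first by rewrite addr0.
  by rewrite -(IH c) -[in RHS]step; congr f; lia.
have -> : b = 0 + ((b + (absz b)%:Z)%R - (absz b)%:Z) by lia.
have e1 : f (0 + ((b + (absz b)%:Z)%R - (absz b)%:Z)) = f 0.
  have : 0 <= b + (absz b)%:Z by lia.
  move=> h; have -> : b + (absz b)%:Z = (absz (b + (absz b)%:Z)%R)%:Z by lia.
  set m := absz (b + _)%R; set a := absz b.
  have -> : 0 + (m%:Z - a%:Z) = (m%:Z - a%:Z) by lia.
  have := stepn a (m%:Z - a%:Z); have -> : m%:Z - a%:Z + a%:Z = 0 + m%:Z by lia.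
  by rewrite stepn => <-.
rewrite /f in e1; rewrite e1; apply: eq_bigr => k _.
by rewrite addr0 Pfun_small.
Qed.

Lemma per_blocks p g (a : int) (m : nat) : (0 < p)%N ->
  (\sum_(k < m * p) (Pfun p g (k%:Z + a) : nat))%N = (m * \sum_(k < p) (g k : nat))%N.
Proof.
move=> p0; elim: m => [|m IH]; first by rewrite mul0n big_ord0.
have e : (m.+1 * p = m * p + p)%N by rewrite mulSnr.
rewrite e big_split_ord /= IH.
rewrite (@eq_bigr _ _ _ _ _ _ _ (fun k : 'I_p => (Pfun p g (k%:Z + (a + (m * p)%N%:Z)) : nat))); last first.
  by move=> k _; congr (nat_of_bool (Pfun _ _ _)); lia.
by rewrite per_window // mulSn addnC.
Qed.

Lemma upper_bound p g (a : int) L : (0 < p)%N ->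
  ((\sum_(i < L) (Pfun p g (i%:Z + a) : nat)) * p <=
     (\sum_(k < p) (g k : nat)) * L + (\sum_(k < p) (g k : nat)) * p)%N.
Proof.
move=> p0; set c := (\sum_(k < p) (g k : nat))%N.
set M := (L %/ p).+1.
have LM : (L <= M * p)%N by rewrite /M mulSn; have := leq_divM L p; lia.
have : (\sum_(i < L) (Pfun p g (i%:Z + a) : nat) <= \sum_(i < M * p) (Pfun p g (i%:Z + a) : nat))%N.
  rewrite -!(big_mkord xpredT (fun i => (Pfun p g (i%:Z + a) : nat))).
  rewrite [X in (_ <= X)%N](@big_cat_nat _ _ _ L) //=; lia.
rewrite per_blocks // => h.
have h2 : (L %/ p * p <= L)%N by apply: leq_divM.
rewrite /M in h; nia.
Qed.
Lemma real_step (R : realType) (a b E q m n1 : R) : 0 < q -> 0 < n1 -> n1 <= m -> 0 <= E ->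
  a * q <= b * q + E -> a / m <= b / m + (E / q) / n1.
Proof.
move=> q0 n0 nm E0 h.
have m0 : 0 < m by apply: lt_le_trans nm.
have h1 : a <= b + E / q.
  by rewrite -(ler_pM2r q0) mulrDl mulfVK ?gt_eqF.
have h2 : E / q / m <= E / q / n1.
  apply: ler_wpM2l; first by rewrite divr_ge0 // ltW.
  by rewrite lef_pV2 ?posrE.
apply: le_trans (lerD (lexx _) h2).
by rewrite -mulrDl ler_wpM2r // invr_ge0 ltW.
Qed.
Lemma esub_le (R : realType) (x y : \bar R) (e : R) : (x <= y + e%:E)%E -> (x - e%:E <= y)%E.
Proof.
move: x y => [x| |] [y| |] //=; rewrite ?lee_fin ?leey ?leNye //.
by rewrite lerBlDr.
Qed.

Lemma limsup_le (R : realType) (u v : nat -> R) (C : R) : 0 <= C ->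
  (forall N, u N <= v N + C / N.+1%:R) ->
  (limn_esup (fun N => (u N)%:E) <= limn_esup (fun N => (v N)%:E))%E.
Proof.
move=> C0 H; rewrite /limn_esup !limf_esupE.
apply/lee_subgt0Pr => e e0.
apply: le_ereal_inf_tmp => y [V hV <-].
case: hV => M0 _ hM0.
have Ce0 : 0 <= C / e by rewrite divr_ge0 // ltW.
pose M := maxn M0 (Num.Def.archi_bound (C / e)).
pose W := [set k : nat | (M <= k)%N]%classic.
have Winf : (\oo : set (set nat))%classic W by exists M.
apply: esub_le.
apply: (@le_trans _ _ (ereal_sup ((fun N => (u N)%:E) @` W)%classic)).
  by apply: ereal_inf_lbound; exists W.
apply: ge_ereal_sup => z [k Wk <-].
have Vk : V k by apply: hM0; rewrite /= (leq_trans (leq_maxl _ _) Wk).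
have hk : C / k.+1%:R <= e.
  rewrite ler_pdivrMr ?ltr0n //.
  have := archi_boundP Ce0; rewrite ltr_pdivrMr // => h.
  apply/ltW/(lt_le_trans h); rewrite mulrC ler_wpM2l ?ltW // ltr_nat ltnS.
  exact: leq_trans (leq_maxr M0 _) Wk.
apply: (@le_trans _ _ ((v k)%:E + e%:E)%E).
  by rewrite -EFinD lee_fin (le_trans (H k)) // lerD2l.
by rewrite leeD2r //; apply: ereal_sup_ubound; exists k.
Qed.
Theorem theorem4 (R : realType) (S : seq nat) :
  S != [::] -> all (fun k => (0 < k)%N) S ->
  let s := (\max_(k <- S) k)%N in
  exists (D : int -> bool) (p : nat),
    [/\ dominating S D,
        (0 < p)%N, periodic_set D p, (p <= 2 * s * 2 ^ (2 * s))%N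
      & forall D' : int -> bool, dominating S D' ->
          (density R D <= density R D')%E].
Proof.
move=> Sne Spos s.
have Hs : forall k, k \in S -> (k <= s)%N.
  by move=> k kS; apply: (@leq_bigmax_seq _ S xpredT (fun k => k) k kS).
have s0 : (0 < s)%N.
  move: Sne Spos Hs; case: S @s => [//|k S'] s' _ /andP [k0 _] Hs.
  by apply: leq_trans k0 (Hs k _); rewrite inE eqxx.
have [p0 [g0 [p0pos p0n Dd Hmin]]] := exists_min S s.
set c0 := (\sum_(k < p0) (g0 k : nat))%N in Hmin.
exists (Pfun p0 g0), p0; split => //.
- by move=> x; have := Pfun_per p0 g0 1 x; rewrite mul1r.
- by apply: leq_trans p0n _; apply: leq_pmull; rewrite muln_gt0.
move=> D' HD'.
set K := (2 ^ (2 * s) + 2 * s)%N.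
pose E := ((c0 * (K + p0))%N%:R : R).
apply: (@limsup_le R (fun N => (count_sym (Pfun p0 g0) N)%:R / ((2*N).+1)%:R)
   (fun N => (count_sym D' N)%:R / ((2*N).+1)%:R) (E / p0%:R)).
  by rewrite divr_ge0.
move=> N.
have hu : (count_sym (Pfun p0 g0) N * p0 <= c0 * (2*N).+1 + c0 * p0)%N :=
  @upper_bound p0 g0 (- N%:Z) (2*N).+1 p0pos.
pose w := fun x : int => D' (x - N%:Z).
have hv : valid S s w (2*N).+1.
  move=> c _ _; rewrite (@domb_shift S s w D' c%:Z (c%:Z - N%:Z)) //.
    by move/dominatingP: HD'.
  by move=> d _; rewrite /w; congr D'; lia.
have hl : (c0 * (2*N).+1 <= count_sym D' N * p0 + c0 * K)%N :=
  @lower_bound S s p0 c0 Hs Hmin (2*N).+1 w hv.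
apply: real_step.
- by rewrite ltr0n.
- by rewrite ltr0n.
- by rewrite ler_nat; lia.
- by rewrite /E.
- rewrite /E -!natrM -natrD ler_nat; nia.
Qed.
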